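(* Let $K$ be a real field, let $R:=\prod_{x\in K}K$ (componentwise operations), regard $K\subseteq R$ via constant functions, and let $E(R)$ be the set of idempotents of $R$. Let $$A:=\Big\{\sum_{i=1}^n e_ix_i: n\in\mathbb N,\ e_i\in E(R),\ x_i\in K\Big\}.$$ Then $A$ is a von Neumann regular Baer ring, $A$ is a proper subring of $R$, and $R$ is the complete ring of quotients of $A$. In particular $A$ is a Baer von Neumann regular ring that is not rationally complete.
   Context: A ring is von Neumann regular if for every $a$ there is $b$ with $a^2b=a$. A commutative ring is Baer if every annihilator ideal is generated by an idempotent. A real field is a field in which $-1$ is not a sum of squares. The complete ring of quotients $Q(A)$ of a commutative ring $A$ is its maximal rational extension; $A$ is rationally complete if $A=Q(A)$. *)

(* Defs.v *)
From HB Require Import structures.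
From mathcomp Require Import all_boot all_order all_algebra.
Set Implicit Arguments. Unset Strict Implicit. Unset Printing Implicit Defensive.
Import Order.TTheory GRing.Theory Num.Theory.
Local Open Scope ring_scope.

Definition real_field (K : fieldType) : Prop :=
  forall s : seq K, \sum_(x <- s) x ^+ 2 <> -1.

Section FunRing.
Variable K : fieldType.
Definition RK := K -> K.
Definition fadd (f g : RK) : RK := fun t => f t + g t.
Definition fopp (f : RK) : RK := fun t => - f t.
Definition fmul (f g : RK) : RK := fun t => f t * g t.
Definition fcst (c : K) : RK := fun _ => c.
Definition fzero : RK := fcst 0.
Definition fone : RK := fcst 1.

Definition fidem (e : RK) : Prop := fmul e e = e.

Definition Aset (a : RK) : Prop :=
  exists s : seq (RK * K),
    (forall i, (i < size s)%N -> fidem (nth (fzero, 0) s i).1) /\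
    a = (fun t => \sum_(p <- s) p.1 t * p.2).

Definition subring (P : RK -> Prop) : Prop :=
  P fzero /\ P fone /\
  (forall a b, P a -> P b -> P (fadd a b)) /\
  (forall a, P a -> P (fopp a)) /\
  (forall a b, P a -> P b -> P (fmul a b)).

Definition vN_regular (P : RK -> Prop) : Prop :=
  forall a, P a -> exists b, P b /\ fmul (fmul a a) b = a.

Definition baer (P : RK -> Prop) : Prop :=
  forall X : RK -> Prop, (forall x, X x -> P x) ->
  exists e, P e /\ fidem e /\
    forall a, P a ->
      ((forall x, X x -> fmul a x = fzero) <-> exists b, P b /\ a = fmul e b).

Definition rational_in_R (P : RK -> Prop) : Prop :=
  forall r s : RK, s <> fzero -> exists a, P a /\ P (fmul r a) /\ fmul s a <> fzero.

(* An abstract commutative ring S together with an embedding j of the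
   subring P into S (j is only constrained on P) is a ring extension of P. *)
Definition ring_ext_of (P : RK -> Prop) (S : comNzRingType) (j : RK -> S) : Prop :=
  j fone = 1 /\
  (forall a b, P a -> P b -> j (fadd a b) = j a + j b) /\
  (forall a b, P a -> P b -> j (fmul a b) = j a * j b) /\
  (forall a b, P a -> P b -> j a = j b -> a = b).

Definition rational_ext_of (P : RK -> Prop) (S : comNzRingType) (j : RK -> S) : Prop :=
  ring_ext_of P j /\
  forall r s : S, s != 0 ->
    exists a, P a /\ (exists b, P b /\ r * j a = j b) /\ s * j a != 0.

Definition R_is_Q (P : RK -> Prop) : Prop :=
  rational_in_R P /\
  forall (S : comNzRingType) (j : RK -> S), rational_ext_of P j ->
    exists g : S -> RK,
      g 1 = fone /\
      (forall x y, g (x + y) = fadd (g x) (g y)) /\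
      (forall x y, g (x * y) = fmul (g x) (g y)) /\
      injective g /\
      (forall a, P a -> g (j a) = a).

Definition rationally_complete (P : RK -> Prop) : Prop :=
  forall (S : comNzRingType) (j : RK -> S), rational_ext_of P j ->
    forall y : S, exists a, P a /\ j a = y.
End FunRing.

(* Main.v *)
Require Import Defs.
From HB Require Import structures.
From mathcomp Require Import all_boot all_order all_algebra.
From Stdlib Require Import Classical ClassicalEpsilon FunctionalExtensionality PropExtensionality.
Set Implicit Arguments. Unset Strict Implicit. Unset Printing Implicit Defensive.
Import Order.TTheory GRing.Theory Num.Theory.
Local Open Scope ring_scope.

Lemma pdec (P : Prop) : {P} + {~ P}.
Proof.
have [b Hb] := constructive_indefinite_description
  (fun b : bool => if b then P else ~ P)
  (match classic P with or_introl p => ex_intro _ true p | or_intror n => ex_intro _ false n end).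
by case: b Hb => H; [left|right].
Qed.

Definition pb (P : Prop) : bool := if pdec P then true else false.
Lemma pbP (P : Prop) : reflect P (pb P).
Proof. by rewrite /pb; case: pdec => H; constructor. Qed.

Definition FK (K : fieldType) := K -> K.

Section Inst.
Variable K : fieldType.
Definition fk_eq (f g : FK K) : bool := pb (f = g).
Lemma fk_eqP : Equality.axiom fk_eq.
Proof. move=> f g; exact: pbP. Qed.
HB.instance Definition _ := hasDecEq.Build (FK K) fk_eqP.

Definition fk_find (P : pred (FK K)) (n : nat) : option (FK K) :=
  match pdec (exists x, P x) with
  | left H => Some (proj1_sig (constructive_indefinite_description _ H))
  | right _ => None end.
Lemma fk_correct P n x : fk_find P n = Some x -> P x.
Proof. rewrite /fk_find; case: pdec => // H [<-]. exact: proj2_sig (constructive_indefinite_description _ H). Qed.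
Lemma fk_complete (P : pred (FK K)) : (exists x, P x) -> exists n, fk_find P n.
Proof. move=> H; exists 0%N; rewrite /fk_find; case: pdec => //. Qed.
Lemma fk_ext (P Q : pred (FK K)) : P =1 Q -> fk_find P =1 fk_find Q.
Proof. move=> H; have -> : P = Q by apply: functional_extensionality. by []. Qed.
HB.instance Definition _ := hasChoice.Build (FK K) fk_correct fk_complete fk_ext.

Lemma fk_addA : associative (@fadd K). Proof. by move=> f g h; apply: functional_extensionality => t; rewrite /fadd addrA. Qed.
Lemma fk_addC : commutative (@fadd K). Proof. by move=> f g; apply: functional_extensionality => t; rewrite /fadd addrC. Qed.
Lemma fk_add0 : left_id (@fzero K) (@fadd K). Proof. by move=> f; apply: functional_extensionality => t; rewrite /fadd /fzero /fcst add0r. Qed.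
Lemma fk_addN : left_inverse (@fzero K) (@fopp K) (@fadd K). Proof. by move=> f; apply: functional_extensionality => t; rewrite /fadd /fopp /fzero /fcst addNr. Qed.
HB.instance Definition _ := GRing.isZmodule.Build (FK K) fk_addA fk_addC fk_add0 fk_addN.
Lemma fk_mulA : associative (@fmul K). Proof. by move=> f g h; apply: functional_extensionality => t; rewrite /fmul mulrA. Qed.
Lemma fk_mulC : commutative (@fmul K). Proof. by move=> f g; apply: functional_extensionality => t; rewrite /fmul mulrC. Qed.
Lemma fk_mul1 : left_id (@fone K) (@fmul K). Proof. by move=> f; apply: functional_extensionality => t; rewrite /fmul /fone /fcst mul1r. Qed.
Lemma fk_mulD : left_distributive (@fmul K) (@fadd K). Proof. by move=> f g h; apply: functional_extensionality => t; rewrite /fmul /fadd mulrDl. Qed.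
Lemma fk_one0 : (@fone K : FK K) != (@fzero K : FK K).
Proof. apply/eqP => /(congr1 (fun f => f 0)); rewrite /fone /fzero /fcst; apply/eqP; exact: oner_neq0. Qed.
HB.instance Definition _ := GRing.Zmodule_isComNzRing.Build (FK K) fk_mulA fk_mulC fk_mul1 fk_mulD fk_one0.
End Inst.
Section S.
Variable K : fieldType.
Implicit Types a b : RK K.

Definition FV a := exists L : seq K, forall t, a t \in L.

Lemma feq a b : (forall t, a t = b t) -> a = b.
Proof. exact: functional_extensionality. Qed.

Lemma idem01 (x : K) : x * x = x -> x = 0 \/ x = 1.
Proof.
move=> h; have : x * (x - 1) = 0 by rewrite mulrBr mulr1 h subrr.
by move/eqP; rewrite mulf_eq0 subr_eq0 => /orP [] /eqP; [left|right].
Qed.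

Lemma Aset_FV a : Aset a -> FV a.
Proof.
case=> s [Hs ->]; elim: s Hs => [|p s IH] Hs.
  by exists [:: 0] => t; rewrite big_nil inE.
have [|L HL] := IH.
  by move=> i hi; exact: (Hs i.+1 hi).
exists (L ++ [seq p.2 + v | v <- L]) => t; rewrite big_cons mem_cat.
have := Hs 0%N isT; rewrite /fidem /= => /(congr1 (fun f => f t)); rewrite /fmul.
case/idem01 => ->; first by rewrite mul0r add0r HL.
by rewrite mul1r; apply/orP; right; apply/mapP; exists (\sum_(q <- s) q.1 t * q.2).
Qed.

Definition ind a (v : K) : RK K := fun t => if a t == v then 1 else 0.

Lemma FV_Aset a : FV a -> Aset a.
Proof.
case=> L HL; exists [seq (ind a v, v) | v <- undup L]; split.
  move=> i; rewrite size_map => hi; rewrite (nth_map 0) //= /fidem.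
  by apply: feq => t; rewrite /fmul /ind; case: ifP; rewrite ?mulr1 ?mulr0.
apply: feq => t; rewrite big_map /ind.
rewrite (bigD1_seq (a t)) ?mem_undup ?undup_uniq //= eqxx mul1r.
rewrite big1 ?addr0 // => v; rewrite eq_sym => /negbTE ->; by rewrite mul0r.
Qed.

Lemma AsetE : @Aset K = FV.
Proof. apply: functional_extensionality => a; apply: propositional_extensionality; split; [exact: Aset_FV|exact: FV_Aset]. Qed.

Lemma FV_cst c : FV (fcst c).
Proof. by exists [:: c] => t; rewrite inE. Qed.
Lemma FV_add a b : FV a -> FV b -> FV (fadd a b).
Proof. case=> L1 H1 [L2 H2]; exists [seq x + y | x <- L1, y <- L2] => t; exact: allpairs_f. Qed.
Lemma FV_mul a b : FV a -> FV b -> FV (fmul a b).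
Proof. case=> L1 H1 [L2 H2]; exists [seq x * y | x <- L1, y <- L2] => t; exact: allpairs_f. Qed.
Lemma FV_opp a : FV a -> FV (fopp a).
Proof. case=> L1 H1; exists [seq - x | x <- L1] => t; exact: map_f. Qed.
Lemma FV_inv a : FV a -> FV (fun t => (a t)^-1).
Proof. case=> L1 H1; exists [seq x^-1 | x <- L1] => t; exact: map_f. Qed.
Lemma FV_pred (P : K -> bool) : FV (fun t => if P t then 1 else 0).
Proof. by exists [:: 1; 0] => t; case: (P t); rewrite !inE eqxx ?orbT. Qed.

Hypothesis hK : real_field K.

Lemma natr_neq0 n : (n.+1)%:R != 0 :> K.
Proof.
apply/eqP => h; apply: (hK (s := nseq n (1:K))).
rewrite big_nseq expr1n iter_addr addr0; apply/eqP; rewrite -addr_eq0.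
by rewrite -{2}(mulr1n (1:K)) -mulrnDr addn1 h.
Qed.

Lemma natr_inj m n : m%:R = n%:R :> K -> m = n.
Proof.
wlog lemn : m n / (m <= n)%N => [H|].
  by case: (leqP m n) => [|/ltnW] h e; [exact: H | symmetry; apply: H].
move=> e; apply/eqP; rewrite eqn_leq lemn /=; apply: contraT; rewrite -ltnNge => lt.
have := natr_neq0 (n - m).-1; rewrite prednK ?subn_gt0 // natrB ?e ?subrr ?eqxx //.
Qed.

Lemma not_FV_id : ~ FV (fun t : K => t).
Proof.
case=> L HL.
have U : uniq [seq (i%:R : K) | i <- iota 0 (size L).+1].
  by rewrite map_inj_in_uniq ?iota_uniq // => x y _ _; exact: natr_inj.
have := uniq_leq_size U (fun x _ => HL x); rewrite size_map size_iota ltnn //.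
Qed.

Lemma sub_FV : subring FV.
Proof.
split; first exact: FV_cst. split; first exact: FV_cst.
split; first exact: FV_add. split; first exact: FV_opp. exact: FV_mul.
Qed.

Lemma vN_FV : vN_regular FV.
Proof.
move=> a Ha; exists (fun t => (a t)^-1); split; first exact: FV_inv.
apply: feq => t; rewrite /fmul; have [->|nz] := eqVneq (a t) 0; first by rewrite !mul0r.
by rewrite -mulrA mulfV // mulr1.
Qed.

Lemma baer_FV : baer FV.
Proof.
move=> X HX.
pose e : RK K := fun t => if pb (exists x, X x /\ x t <> 0) then 0 else 1.
exists e; split.
  have -> : e = fun t => if ~~ pb (exists x, X x /\ x t <> 0) then 1 else 0.
    by apply: feq => t; rewrite /e; case: pb.
  exact: FV_pred.
split.
  by apply: feq => t; rewrite /fmul /e; case: pb; rewrite ?mulr0 ?mulr1.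
move=> a Ha; split.
  move=> H; exists a; split => //; apply: feq => t; rewrite /fmul /e.
  case: pbP => [[x [Xx nz]]|_]; last by rewrite mul1r.
  have := congr1 (fun f => f t) (H x Xx); rewrite /fmul /fzero /fcst => /eqP.
  by rewrite mulf_eq0 (negbTE (introN eqP nz)) orbF mul0r => /eqP.
case=> b [_ ->] x Xx; apply: feq => t; rewrite /fmul /e /fzero /fcst.
case: pbP => [_|nx]; first by rewrite !mul0r.
have [->|nz] := eqVneq (x t) 0; first by rewrite mulr0.
by exfalso; apply: nx; exists x; split => //; apply/eqP.
Qed.

Definition D (t c : K) : RK K := fun u => if u == t then c else 0.

Lemma FV_D t c : FV (D t c).
Proof. by exists [:: c; 0] => u; rewrite /D; case: (u == t); rewrite !inE eqxx ?orbT. Qed.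

Lemma mul_D a t c : fmul a (D t c) = D t (a t * c).
Proof. by apply: feq => u; rewrite /fmul /D; case: eqP => [->|]; rewrite ?mulr0. Qed.

Lemma D_eq0 t c : D t c = @fzero K -> c = 0.
Proof. by move/(congr1 (fun f => f t)); rewrite /D eqxx. Qed.

Lemma fnz (s : RK K) : s <> @fzero K -> exists t, s t != 0.
Proof.
move=> ns; apply: NNPP => H; apply: ns; apply: feq => t.
by rewrite /fzero /fcst; apply/eqP; apply: contraT => h; case: H; exists t.
Qed.

Lemma rat_FV : rational_in_R FV.
Proof.
move=> r s /fnz [t nz]; exists (D t 1); split; first exact: FV_D.
split; first by rewrite mul_D; exact: FV_D.
by rewrite mul_D => /D_eq0 /eqP; rewrite mulr1 (negbTE nz).
Qed.


Lemma fmulC a b : fmul a b = fmul b a.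
Proof. by apply: feq => u; rewrite /fmul mulrC. Qed.
Lemma DD t c d : fmul (D t c) (D t d) = D t (c * d).
Proof. by rewrite mul_D /D eqxx. Qed.
Lemma add_D t c d : fadd (D t c) (D t d) = D t (c + d).
Proof. by apply: feq => u; rewrite /fadd /D; case: eqP; rewrite ?addr0. Qed.
Lemma D0 t : D t 0 = @fzero K.
Proof. by apply: feq => u; rewrite /D /fzero /fcst; case: eqP. Qed.

Section Q.
Variables (S : comNzRingType) (j : RK K -> S) (hj : rational_ext_of FV j).

Let j1 : j (@fone K) = 1. Proof. by case: hj => [[]]. Qed.
Let jadd : forall a b, FV a -> FV b -> j (fadd a b) = j a + j b.
Proof. by case: hj => [[_ []]]. Qed.
Let jmul : forall a b, FV a -> FV b -> j (fmul a b) = j a * j b.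
Proof. by case: hj => [[_ [_ []]]]. Qed.
Let jinj : forall a b, FV a -> FV b -> j a = j b -> a = b.
Proof. by case: hj => [[_ [_ []]]]. Qed.
Let jrat := hj.2.

Lemma j0 : j (@fzero K) = 0.
Proof.
have := jadd (FV_cst 0) (FV_cst 0).
have -> : fadd (@fzero K) (@fzero K) = @fzero K by apply: feq => u; rewrite /fadd /fzero /fcst addr0.
by move/(congr1 (fun y => y - j (@fzero K))); rewrite subrr addrK.
Qed.

Lemma jD0 t c : j (D t c) = 0 -> c = 0.
Proof.
rewrite -j0 => h; apply: D_eq0; apply: jinj h; [exact: FV_D|exact: FV_cst].
Qed.

Lemma exl (y : S) t : exists c, y * j (D t 1) = j (D t c).
Proof.
have ns : j (D t 1) != 0 by apply/eqP => /jD0 /eqP; rewrite oner_eq0.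
have [a [Ha [[b [Hb Eb]] nz]]] := jrat y ns.
have nat : a t != 0.
  by apply/eqP => h; apply: (negP nz); rewrite -(jmul (FV_D t 1) Ha) fmulC mul_D h mul0r D0 j0.
pose c := (a t)^-1.
have E : fmul a (D t c) = D t 1 by rewrite mul_D mulfV.
exists (b t * c).
by rewrite -E (jmul Ha (FV_D t c)) mulrA Eb -(jmul Hb (FV_D t c)) mul_D.
Qed.

Definition g (y : S) : RK K := fun t => proj1_sig (constructive_indefinite_description _ (exl y t)).
Lemma gP y t : y * j (D t 1) = j (D t (g y t)).
Proof. exact: proj2_sig (constructive_indefinite_description _ (exl y t)). Qed.
Lemma gU y t c : y * j (D t 1) = j (D t c) -> g y t = c.
Proof.
rewrite gP => /jinj h; have := h (FV_D _ _) (FV_D _ _).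
by move/(congr1 (fun f => f t)); rewrite /D eqxx.
Qed.

Lemma g1 : g 1 = @fone K.
Proof. by apply: feq => t; apply: gU; rewrite mul1r. Qed.
Lemma gadd x y : g (x + y) = fadd (g x) (g y).
Proof. by apply: feq => t; apply: gU; rewrite mulrDl !gP -(jadd (FV_D t _) (FV_D t _)) add_D. Qed.
Lemma gmul x y : g (x * y) = fmul (g x) (g y).
Proof.
apply: feq => t; apply: gU; rewrite -mulrA gP.
have -> : j (D t (g y t)) = j (D t 1) * j (D t (g y t)) by rewrite -(jmul (FV_D t 1) (FV_D t _)) DD mul1r.
by rewrite mulrA gP -(jmul (FV_D t _) (FV_D t _)) DD.
Qed.
Lemma gj a : FV a -> g (j a) = a.
Proof. by move=> Ha; apply: feq => t; apply: gU; rewrite -(jmul Ha (FV_D t 1)) mul_D mulr1. Qed.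
Lemma ginj : injective g.
Proof.
move=> x y exy; apply/eqP; rewrite -subr_eq0; apply/negPn/negP => nz.
have Z t : (x - y) * j (D t 1) = 0.
  by rewrite mulrBl !gP exy subrr.
have [a [Ha [[b [Hb Eb]] nz2]]] := jrat (x - y) nz.
apply: (negP nz2); rewrite Eb.
suff -> : b = @fzero K by rewrite j0.
apply: feq => t; rewrite /fzero /fcst; apply: (@jD0 t).
have -> : D t (b t) = fmul b (D t 1) by rewrite mul_D mulr1.
by rewrite (jmul Hb (FV_D t 1)) -Eb mulrAC Z mul0r.
Qed.

End Q.

Lemma RQ : R_is_Q FV.
Proof.
split; first exact: rat_FV.
move=> S' j hj; exists (g hj); split; first exact: g1.
split; first exact: gadd. split; first exact: gmul.
split; first exact: ginj. exact: gj.
Qed.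

Lemma notRC : ~ rationally_complete FV.
Proof.
move=> H.
have hj : rational_ext_of FV (fun a : RK K => (a : FK K)).
  split.
    split => //.
  move=> r s ns; have [a [Ha [Hra nz]]] := rat_FV r (s:=s) (elimN eqP ns).
  exists a; split => //; split; first by exists (fmul r a).
  by apply/eqP.
have [a [Ha E]] := H _ _ hj (fun t : K => t).
by apply: not_FV_id; rewrite -E.
Qed.

End S.

Theorem mainTheorem10 (K : fieldType) (hK : real_field K) :
  subring (@Aset K) /\ vN_regular (@Aset K) /\ baer (@Aset K) /\
  (exists r : RK K, ~ Aset r) /\
  R_is_Q (@Aset K) /\
  ~ rationally_complete (@Aset K).
Proof.
rewrite AsetE.
split; first exact: sub_FV. split; first exact: vN_FV. split; first exact: baer_FV.
split; first by exists (fun t => t); exact: not_FV_id.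
split; first exact: RQ. exact: notRC.
Qed.
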